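(* Let $i$ be an even positive integer, $n=3i\pm1$, $q=2^n$, and $s=2^{2i}-2^i+1$. Let $B_s=\{(x+1)^s+x^s:x\in\mathrm{GF}(q)\}$ and let $d$ be the inverse of $s$ modulo $2^n-1$. Then for all $\mu\in\mathrm{GF}(q)$, \[\hat f_{B_s}(\mu)=\hat f_E(\mu^d)=\sum_{x\in\mathrm{GF}(q)}(-1)^{\mathrm{Tr}(x^{2^i+1}+\mu^dx)},\] where $E=\{x\in\mathrm{GF}(q):\mathrm{Tr}(x^{2^i+1})=1\}$.
   Context: $\mathrm{Tr}$ is the absolute trace $\mathrm{GF}(2^n)\to\mathrm{GF}(2)$. For $S\subseteq\mathrm{GF}(q)$, $f_S$ is its characteristic function as a Boolean function, and $\hat f(\mu)=\sum_{x\in\mathrm{GF}(2^n)}(-1)^{f(x)+\mathrm{Tr}(\mu x)}$ is the Walsh transform. Under the hypotheses, $\gcd(s,2^n-1)=1$, so $d$ exists. *)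

(* Defs.v *)
(* GF(2^n) is modelled as an arbitrary finite field F with #|F| = 2^n. *)
From mathcomp Require Import all_boot all_order all_algebra all_field.
Set Implicit Arguments. Unset Strict Implicit. Unset Printing Implicit Defensive.
Import GRing.Theory.
Local Open Scope ring_scope.

(* Absolute trace GF(2^n) -> GF(2), valued in F (it lies in the prime field {0,1}). *)
Definition Tr (F : finFieldType) (n : nat) (x : F) : F :=
  \sum_(k < n) x ^+ (2 ^ k).

(* (-1)^t for t in GF(2) (embedded in F as 0 or 1), as an integer. *)
Definition sgnF (F : finFieldType) (t : F) : int := if t == 0 then 1 else -1.

Definition charf (F : finFieldType) (S : {set F}) (x : F) : bool := x \in S.

Definition walsh (F : finFieldType) (n : nat) (f : F -> bool) (mu : F) : int :=
  \sum_(x : F) sgnF ((f x)%:R + Tr n (mu * x)).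

Definition Bset (F : finFieldType) (s : nat) : {set F} :=
  [set (x + 1) ^+ s + x ^+ s | x : F].

Definition Eset (F : finFieldType) (n i : nat) : {set F} :=
  [set x : F | Tr n (x ^+ (2 ^ i + 1)) == 1].

(* Main.v *)
Require Import Defs.
From mathcomp Require Import all_boot all_order all_algebra all_field.
From mathcomp Require Import zify ring.
Set Implicit Arguments. Unset Strict Implicit. Unset Printing Implicit Defensive.
Import Order.TTheory GRing.Theory Num.Theory.
Local Open Scope ring_scope.
Section Basic.
Variable F : finFieldType.
Variable n : nat.
Hypothesis hq : #|F| = (2 ^ n)%N.
Hypothesis hnodd : odd n.

Lemma char2 : (2 \in [pchar F])%N.
Proof. exact: (card_finPcharP hq). Qed.

Lemma add2 (x : F) : x + x = 0.
Proof. exact: (addrr_pchar2 char2). Qed.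

Lemma oppF (x : F) : - x = x.
Proof. exact: (oppr_pchar2 char2). Qed.

Definition fr_def (j : nat) (x : F) := x ^+ (2 ^ j).
Fact fr_key : unit. Proof. by []. Qed.
Definition fr := locked_with fr_key fr_def.
Lemma frE j (x : F) : fr j x = x ^+ (2 ^ j). Proof. by rewrite /fr unlock. Qed.

Lemma frS (j : nat) (x : F) : fr j.+1 x = fr j x ^+ 2.
Proof. by rewrite !frE expnS mulnC exprM. Qed.

Lemma sqrD (x y : F) : (x + y) ^+ 2 = x ^+ 2 + y ^+ 2.
Proof. by rewrite sqrrD (mulrn_pchar char2) addr0. Qed.

Lemma frD (j : nat) (x : F) (y : F) : fr j (x + y) = fr j x + fr j y.
Proof. elim: j => [|j IH]; first by rewrite !frE !expr1. by rewrite !frS IH sqrD. Qed.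

Lemma frM (j : nat) (x : F) (y : F) : fr j (x * y) = fr j x * fr j y.
Proof. by rewrite !frE exprMn. Qed.

Lemma frV (j : nat) (x : F) : fr j (x^-1) = (fr j x)^-1.
Proof. by rewrite !frE exprVn. Qed.

Lemma fr0 j : fr j (0:F) = 0.
Proof. by rewrite !frE expr0n expn_eq0. Qed.

Lemma fr1 j : fr j (1:F) = 1.
Proof. by rewrite !frE expr1n. Qed.

Lemma frX (j : nat) (x : F) (m : nat) : fr j (x ^+ m) = fr j x ^+ m.
Proof. by rewrite !frE -!exprM mulnC. Qed.

Lemma frfr (j : nat) (k : nat) (x : F) : fr j (fr k x) = fr (j + k) x.
Proof. by rewrite !frE -exprM -expnD addnC. Qed.

Lemma frn (x : F) : fr n x = x.
Proof. by rewrite !frE -hq expf_card. Qed.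

Lemma frnm (m : nat) (x : F) : fr (n * m) x = x.
Proof.
elim: m => [|m IH]; first by rewrite muln0 frE expr1.
by rewrite mulnS -frfr IH frn.
Qed.

Lemma frmod (j : nat) (x : F) : fr j x = fr (j %% n) x.
Proof. by rewrite {1}(divn_eq j n) -frfr mulnC frnm. Qed.

Lemma fr_sum (I : finType) (P : pred I) (G : I -> F) j :
  fr j (\sum_(k | P k) G k) = \sum_(k | P k) fr j (G k).
Proof. by apply: big_morph; [exact: frD | exact: fr0]. Qed.

Lemma fr_inj j : injective (fr j).
Proof.
move=> x y h.
have: fr (n * j.+1 - j) (fr j x) = fr (n * j.+1 - j) (fr j y) by rewrite h.
have hj : (j <= n * j.+1)%N.
  by case: n hnodd => // n' _; rewrite mulSn mulnS; lia.
by rewrite !frfr subnK // !frnm.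
Qed.

Lemma fr_eq0 (j : nat) (x : F) : (fr j x == 0) = (x == 0).
Proof. by rewrite !frE expf_eq0 expn_gt0. Qed.

Definition Tr' (x : F) := Tr n x.

Lemma TrE (x : F) : Tr n x = \sum_(k < n) fr k x.
Proof. by apply: eq_bigr => k _; rewrite frE. Qed.

Lemma TrD (x : F) (y : F) : Tr n (x + y) = Tr n x + Tr n y.
Proof. by rewrite !TrE -big_split /=; apply: eq_bigr => k _; rewrite frD. Qed.

Lemma Tr0 : Tr n (0 : F) = 0.
Proof. by rewrite TrE big1 // => k _; rewrite fr0. Qed.

Lemma Tr_fr1 (x : F) : Tr n (fr 1 x) = Tr n x.
Proof.
rewrite !TrE.
case: n hnodd frn => // m _ hm.
rewrite big_ord_recr /= frfr addn1 hm big_ord_recl /=.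
rewrite [fr 0 x]frE expn0 expr1 addrC; congr (_ + _); apply: eq_bigr => k _.
by rewrite frfr addn1.
Qed.

Lemma Tr_fr (j : nat) (x : F) : Tr n (fr j x) = Tr n x.
Proof. elim: j => [|j IH]; first by rewrite !frE expr1. by rewrite -add1n -frfr Tr_fr1. Qed.

Lemma Tr_sq (x : F) : Tr n x ^+ 2 = Tr n x.
Proof.
have -> : Tr n x ^+ 2 = fr 1 (Tr n x) by rewrite !frE expn1.
rewrite -[in RHS](Tr_fr1 x) !TrE fr_sum; apply: eq_bigr => k _; by rewrite !frfr addnC.
Qed.

Lemma Tr01 (x : F) : Tr n x = 0 \/ Tr n x = 1.
Proof.
have h : Tr n x * (Tr n x - 1) = 0 by rewrite mulrBr mulr1 -expr2 Tr_sq subrr.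
by move/eqP: h; rewrite mulf_eq0 subr_eq0 => /orP [] /eqP; [left | right].
Qed.

Lemma Tr1 : Tr n (1 : F) = 1.
Proof.
rewrite TrE (eq_bigr (fun _ => 1)) => [|k _]; last by rewrite fr1.
rewrite sumr_const card_ord.
have [m ->] : exists m, n = (m.*2).+1 by exists n./2; rewrite -[LHS]odd_double_half hnodd.
by rewrite mulrSr -mul2n mulrnA (mulrn_pchar char2) mul0rn add0r.
Qed.


Definition chi (x : F) : int := sgnF (Tr n x).

Lemma chiD (x y : F) : chi (x + y) = chi x * chi y.
Proof.
rewrite /chi /sgnF TrD; case: (Tr01 x) => ->; case: (Tr01 y) => ->;
  rewrite ?addr0 ?add0r ?add2 ?eqxx ?oner_eq0 //.
Qed.

Lemma chi0 : chi 0 = 1.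
Proof. by rewrite /chi /sgnF Tr0 eqxx. Qed.

Lemma chi1 : chi 1 = -1.
Proof. by rewrite /chi /sgnF Tr1 oner_eq0. Qed.

Lemma chi_sqr (x : F) : chi x * chi x = 1.
Proof. by rewrite -chiD add2 chi0. Qed.

Lemma chi_fr j (x : F) : chi (fr j x) = chi x.
Proof. by rewrite /chi Tr_fr. Qed.

Lemma sum_chi (a : F) :
  \sum_(x : F) chi (a * x) = if a == 0 then #|F|%:R else 0.
Proof.
have [-> | a0] := eqVneq a 0.
  by rewrite (eq_bigr (fun _ => 1)) ?sumr_const // => x _; rewrite mul0r chi0.
set S := \sum_x _.
have : S = - S.
  rewrite {1}/S (reindex_inj (addIr a^-1)) /= /S -sumrN; apply: eq_bigr => x _.
  by rewrite mulrDr divff // chiD chi1 mulrN1.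
move=> h; lia.
Qed.

Lemma sum_chi_eq (z : F) :
  \sum_(l : F) chi (l * z) = if z == 0 then #|F|%:R else 0.
Proof. by rewrite -sum_chi; apply: eq_bigr => l _; rewrite mulrC. Qed.
Variable i : nat.
Hypothesis hipos : (0 < i)%N.
Hypothesis hieven : ~~ odd i.
Hypothesis hn : (n = 3 * i + 1 \/ n = 3 * i - 1)%N.

Lemma n_gt1 : (1 < n)%N.
Proof. case: hn => ->; lia. Qed.

Definition sg (j : nat) (x : F) := fr (i * j) x.
Definition sgm (j : nat) (x : F) := fr (i * (n - j)) x.

Lemma sgmK j (x : F) : (j <= n)%N -> sg j (sgm j x) = x.
Proof. by move=> hj; rewrite /sg /sgm frfr -mulnDr subnKC // mulnC frnm. Qed.

Lemma sgKm j (x : F) : (j <= n)%N -> sgm j (sg j x) = x.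
Proof. by move=> hj; rewrite /sg /sgm frfr -mulnDr subnK // mulnC frnm. Qed.

Lemma sgsg j k (x : F) : sg j (sg k x) = sg (j + k) x.
Proof. by rewrite /sg frfr mulnDr. Qed.

Lemma sgmsgm j k (x : F) : (j + k <= n)%N -> sgm j (sgm k x) = sgm (j + k) x.
Proof.
move=> h; rewrite /sgm frfr -mulnDr.
have -> : (n - j + (n - k) = (n - (j + k)) + n * 1)%N by lia.
by rewrite mulnDr -frfr mulnCA frnm.
Qed.

Lemma sgm_sg j k (x : F) : (k <= j)%N -> (j <= n)%N -> sgm k (sg j x) = sg (j - k) x.
Proof.
move=> h1 h2; rewrite /sgm /sg frfr -mulnDr.
have -> : (n - k + j = (j - k) + n * 1)%N by lia.
by rewrite mulnDr -frfr mulnCA frnm.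
Qed.

Lemma sg_sgm j k (x : F) : (j <= k)%N -> (k <= n)%N -> sg j (sgm k x) = sgm (k - j) x.
Proof.
move=> h1 h2; rewrite /sgm /sg frfr -mulnDr.
have -> : (j + (n - k) = n - (k - j))%N by lia.
by [].
Qed.

Lemma sgD j (x y : F) : sg j (x + y) = sg j x + sg j y. Proof. exact: frD. Qed.
Lemma sgM j (x y : F) : sg j (x * y) = sg j x * sg j y. Proof. exact: frM. Qed.
Lemma sgV j (x : F) : sg j (x^-1) = (sg j x)^-1. Proof. exact: frV. Qed.
Lemma sgX j (x : F) m : sg j (x ^+ m) = sg j x ^+ m. Proof. exact: frX. Qed.
Lemma sg1 j : sg j (1 : F) = 1. Proof. exact: fr1. Qed.
Lemma sgmD j (x y : F) : sgm j (x + y) = sgm j x + sgm j y. Proof. exact: frD. Qed.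
Lemma sgmM j (x y : F) : sgm j (x * y) = sgm j x * sgm j y. Proof. exact: frM. Qed.
Lemma sgmV j (x : F) : sgm j (x^-1) = (sgm j x)^-1. Proof. exact: frV. Qed.
Lemma sgmX j (x : F) m : sgm j (x ^+ m) = sgm j x ^+ m. Proof. exact: frX. Qed.
Lemma Tr_sg j (x : F) : Tr n (sg j x) = Tr n x. Proof. exact: Tr_fr. Qed.
Lemma Tr_sgm j (x : F) : Tr n (sgm j x) = Tr n x. Proof. exact: Tr_fr. Qed.
Lemma chi_sg j (x : F) : chi (sg j x) = chi x. Proof. exact: chi_fr. Qed.
Lemma chi_sgm j (x : F) : chi (sgm j x) = chi x. Proof. exact: chi_fr. Qed.

Definition e := (2 ^ i + 1)%N.
Definition K := (2 ^ (3 * i) + 1)%N.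

Lemma expeE (x : F) : x ^+ e = x * sg 1 x.
Proof. by rewrite /e exprD expr1 mulrC /sg muln1 frE. Qed.

Lemma expKE (x : F) : x ^+ K = x * sg 3 x.
Proof. by rewrite /K exprD expr1 mulrC /sg mulnC frE. Qed.

Lemma sg3A (x : F) : n = (3 * i - 1)%N -> sg 3 x = x ^+ 2.
Proof.
move=> hA; rewrite /sg frmod.
have -> : ((i * 3) %% n = 1)%N.
  have -> : (i * 3 = 1 * n + 1)%N by lia.
  by rewrite modnMDl modn_small // n_gt1.
by rewrite frE.
Qed.

Lemma sg3B (x : F) : n = (3 * i + 1)%N -> sg 3 x ^+ 2 = x.
Proof.
move=> hB; rewrite /sg.
have h : fr 1 (fr (i * 3) x) = x by rewrite frfr (_ : (1 + i * 3 = n)%N) ?frn //; lia.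
by rewrite -[RHS]h [fr 1 _]frE.
Qed.

Lemma sg_fix (v : F) : sg 1 v = v -> v ^+ 2 = v.
Proof.
move=> h.
have h3 : sg 3 v = v by rewrite -[3%N]/(1 + (1 + 1))%N -!sgsg !h.
case: hn => hB.
  by rewrite -{1}h3 sg3B.
by rewrite -sg3A.
Qed.

Lemma sq01 (v : F) : v ^+ 2 = v -> v = 0 \/ v = 1.
Proof.
move=> h; have : v * (v - 1) = 0 by rewrite mulrBr mulr1 -expr2 h subrr.
by move/eqP; rewrite mulf_eq0 subr_eq0 => /orP [] /eqP; [left | right].
Qed.
Lemma sg_sgm' j k (x : F) : (k <= j)%N -> (k <= n)%N -> sg j (sgm k x) = sg (j - k) x.
Proof.
move=> h1 h2; rewrite /sgm /sg frfr -mulnDr.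
have -> : (j + (n - k) = (j - k) + n * 1)%N by lia.
by rewrite mulnDr -frfr mulnCA frnm.
Qed.

Lemma sg0 j : sg j (0 : F) = 0. Proof. exact: fr0. Qed.
Lemma sg_eq0 j (x : F) : (sg j x == 0) = (x == 0). Proof. exact: fr_eq0. Qed.
Lemma sgm_eq0 j (x : F) : (sgm j x == 0) = (x == 0). Proof. exact: fr_eq0. Qed.

Definition w (a b c : F) := a ^+ 5 / (b ^+ 2 * c) + a ^+ 2 * b / c + b / (a * c)
  + c ^+ 2 / (a * b ^+ 2) + 1 / (a * b ^+ 2 * c).

Lemma keyid (a b c : F) : a != 0 -> b != 0 -> c != 0 ->
  ((1 + a ^+ 3 + b ^+ 3 + c ^+ 3) / (c * a ^+ 2)) *
  ((1 + a ^+ 6 + b ^+ 3 + c ^+ 3) / (a ^+ 2 * b ^+ 2)) = w a b c + w c (a ^+ 2) (b ^+ 2).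
Proof.
move=> a0 b0 c0.
have -> : ((1 + a ^+ 3 + b ^+ 3 + c ^+ 3) / (c * a ^+ 2)) *
  ((1 + a ^+ 6 + b ^+ 3 + c ^+ 3) / (a ^+ 2 * b ^+ 2)) = w a b c + w c (a ^+ 2) (b ^+ 2) +
  ((b ^+ 3 + c ^+ 3 + b ^+ 3 * c ^+ 3) / (a ^+ 4 * b ^+ 2 * c) + (b ^+ 3 + c ^+ 3 + b ^+ 3 * c ^+ 3) / (a ^+ 4 * b ^+ 2 * c)).
  by rewrite /w; field; rewrite c0 b0 a0.
by rewrite add2 addr0.
Qed.

Lemma Tr_w2 (a b c : F) (s : F -> F) :
  (forall x y, s (x + y) = s x + s y) -> (forall x y, s (x * y) = s x * s y) ->
  (forall x, s (x^-1) = (s x)^-1) -> (forall x m, s (x ^+ m) = s x ^+ m) -> s 1 = 1 ->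
  (forall x, Tr n (s x) = Tr n x) ->
  Tr n (w a b c + w (s a) (s b) (s c)) = 0.
Proof.
move=> sD sM sV sX s1 sT.
have -> : w (s a) (s b) (s c) = s (w a b c).
  by rewrite /w !(sD, sM, sV, sX, s1).
by rewrite TrD sT add2.
Qed.

Definition Xc (c : F) := c * sg 3 c.

Lemma factB (l c : F) : c != 0 ->
  l * (c * sg 1 c) = 1 + Xc c + sgm 1 (Xc c) + sgm 2 (Xc c) -> Tr n (l ^+ e) = 0.
Proof.
move=> c0 h.
have n3 : (3 < n)%N by case: hn => ->; lia.
have hl : l = (1 + Xc c + sgm 1 (Xc c) + sgm 2 (Xc c)) / (c * sg 1 c).
  by rewrite -h mulfK // mulf_neq0 // sg_eq0.
rewrite expeE.
case: hn => hB; last first.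
  set a := sgm 2 c; set b := sgm 1 c.
  have a0 : a != 0 by rewrite sgm_eq0.
  have b0 : b != 0 by rewrite sgm_eq0.
  have sa : sg 1 a = b by rewrite /a sg_sgm //; lia.
  have sb : sg 1 b = c by rewrite /b sgmK //; lia.
  have ca : c = sg 2 a by rewrite /a sgmK //; lia.
  have sc : sg 1 c = a ^+ 2 by rewrite ca sgsg sg3A.
  have s3c : sg 3 c = c ^+ 2 by rewrite sg3A.
  have s2c : sg 2 c = b ^+ 2 by rewrite -sb sgsg sg3A.
  have X1 : sgm 1 (Xc c) = b ^+ 3.
    by rewrite /Xc sgmM sgm_sg //; [rewrite -/b s2c; ring | lia].
  have X2 : sgm 2 (Xc c) = a ^+ 3.
    by rewrite /Xc sgmM sgm_sg //; [rewrite -/a subSS subn1 /= sc; ring | lia].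
  have X0 : Xc c = c ^+ 3 by rewrite /Xc s3c; ring.
  rewrite X1 X2 X0 sc in hl.
  have hl' : l = (1 + a ^+ 3 + b ^+ 3 + c ^+ 3) / (c * a ^+ 2).
    by rewrite hl; congr (_ / _); ring.
  have sl : sg 1 l = (1 + a ^+ 6 + b ^+ 3 + c ^+ 3) / (a ^+ 2 * b ^+ 2).
    rewrite hl' /= !(sgD, sgM, sgV, sgX, sg1) sa sb sc -!exprM /=.
    by congr (_ / _); ring.
  rewrite sl hl' keyid //.
  have e1 : sg 2 b = a ^+ 2 by rewrite -sc -sb sgsg.
  have -> : w c (a ^+ 2) (b ^+ 2) = w (sg 2 a) (sg 2 b) (sg 2 c) by rewrite -ca e1 s2c.
  apply: Tr_w2; [exact: sgD | exact: sgM | exact: sgV | exact: sgX | exact: sg1 | exact: Tr_sg].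
set b := sg 2 c; set t := sg 3 c; set p := sg 4 c.
have b0 : b != 0 by rewrite sg_eq0.
have t0 : t != 0 by rewrite sg_eq0.
have p0 : p != 0 by rewrite sg_eq0.
have ct : c = t ^+ 2 by rewrite sg3B.
have sc : sg 1 c = p ^+ 2 by rewrite /p -[4%N]/(3 + 1)%N -sgsg sg3B.
have eb : sg 3 (sgm 1 c) = b by rewrite sg_sgm' //; lia.
have smc : sgm 1 c = b ^+ 2 by rewrite -eb sg3B.
have ep : sg 3 (sgm 2 c) = sg 1 c by rewrite sg_sgm' //; lia.
have sm2c : sgm 2 c = p ^+ 4.
  by rewrite -[4%N]/(2 * 2)%N exprM -sc -ep sg3B.
have X0 : Xc c = t ^+ 3 by rewrite /Xc -/t ct; ring.
have X1 : sgm 1 (Xc c) = b ^+ 3.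
  rewrite /Xc sgmM smc sgm_sg //; last by lia.
  by rewrite -/b; ring.
have X2 : sgm 2 (Xc c) = p ^+ 6.
  rewrite /Xc sgmM sm2c sgm_sg //; last by lia.
  by rewrite /= sc; ring.
rewrite X1 X2 X0 sc ct in hl.
have hl' : l = (1 + p ^+ 6 + t ^+ 3 + b ^+ 3) / (p ^+ 2 * t ^+ 2).
  by rewrite hl; congr (_ / _); ring.
have st : sg 1 t = p by rewrite /t /p sgsg.
have sb : sg 1 b = t by rewrite /t /b sgsg.
have sp2 : sg 1 p ^+ 2 = b by rewrite /p /b sgsg -[(1 + 4)%N]/(3 + 2)%N -sgsg sg3B.
have sl : sg 1 l = (1 + p ^+ 3 + t ^+ 3 + b ^+ 3) / (b * p ^+ 2).
  rewrite hl' /= !(sgD, sgM, sgV, sgX, sg1) st sb.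
  have -> : sg 1 p ^+ 6 = b ^+ 3 by rewrite -sp2 -exprM.
  rewrite sp2.
  by congr (_ / _); ring.
rewrite sl hl' mulrC keyid //.
have e0 : b = sgm 2 p by rewrite /p sgm_sg //; lia.
have e1 : p ^+ 2 = sgm 2 t by rewrite -sc /t sgm_sg //; lia.
have e2 : t ^+ 2 = sgm 2 b by rewrite -ct /b sgKm //; lia.
have -> : w b (p ^+ 2) (t ^+ 2) = w (sgm 2 p) (sgm 2 t) (sgm 2 b) by rewrite -e0 -e1 -e2.
apply: Tr_w2; [exact: sgmD | exact: sgmM | exact: sgmV | exact: sgmX | exact: fr1 | exact: Tr_sgm].
Qed.
Definition sK := (2 ^ (2 * i) - 2 ^ i + 1)%N.

Lemma eK : (e * sK = K)%N.
Proof.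
rewrite /e /sK /K.
have h2 : (2 ^ (2 * i) = 2 ^ i * 2 ^ i)%N by rewrite mul2n -addnn expnD.
have h3 : (2 ^ (3 * i) = 2 ^ i * 2 ^ i * 2 ^ i)%N.
  have -> : (3 * i = i + i + i)%N by lia.
  by rewrite !expnD.
rewrite h2 h3.
have : (1 <= 2 ^ i)%N by rewrite expn_gt0.
move: (2 ^ i)%N => t ht.
have -> : (t * t - t = t * (t - 1))%N by rewrite mulnBr muln1.
case: t ht => // t _; rewrite subn1 /=.
ring.
Qed.

Lemma pow4 (z : F) m : z ^+ 3 = 1 -> z ^+ (4 ^ m) = z.
Proof.
move=> h; elim: m => [|m IH]; first by rewrite expr1.
by rewrite expnS mulnC exprM IH -[4%N]/(1 + 3)%N exprD h mulr1 expr1.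
Qed.

Lemma expe_inj : injective (fun x : F => x ^+ e).
Proof.
move=> x y /= h.
have [y0 | y0] := eqVneq y 0.
  have : x ^+ e == 0 by rewrite h y0 expr0n /e addn1.
  by rewrite expf_eq0 y0 => /andP [_ /eqP].
set z := x / y.
have ze : z ^+ e = 1 by rewrite /z exprMn exprVn h divff // expf_neq0.
have z0 : z != 0.
  apply/eqP => z0; move: ze; rewrite z0 expr0n /e addn1 /= => /eqP.
  by rewrite eq_sym oner_eq0.
have zK : z * sg 3 z = 1 by rewrite -expKE -eK exprM ze expr1n.
have z3 : z ^+ 3 = 1.
  case: hn => hB.
    have h3 : sg 3 z = z^-1 by rewrite -(mulKf z0 (sg 3 z)) zK mulr1.
    have := sg3B z hB; rewrite h3 => h4.
    by rewrite -[3%N]/(1 + 2)%N exprD -{1}h4 expr1 exprVn mulVf // expf_neq0.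
  by move: zK; rewrite sg3A // -exprSr.
have zi : z ^+ (2 ^ i) = z.
  have [m ->] : exists m, i = (m.*2)%N by exists i./2; rewrite -[LHS]odd_double_half (negbTE hieven).
  by rewrite -mul2n expnM pow4.
have z1 : z = 1.
  have : z ^+ 2 = 1 by rewrite -ze /e exprD zi expr1 expr2.
  move=> z2; by rewrite -[z]expr1 -[1%N]/(3 - 2)%N expfB // z3 z2 divr1.
by rewrite -[x](divfK y0) -/z z1 mul1r.
Qed.

Definition Lk (l c : F) := l * sg 1 c + sgm 1 (l * c) + sg 3 c + sgm 3 c.
Definition qf (l a : F) := l * a ^+ e + a ^+ K.

Lemma chi_Tr (x y : F) : Tr n x = Tr n y -> chi x = chi y.
Proof. by rewrite /chi => ->. Qed.

Lemma char2_eq (x y z : F) : x = y + (z + z) -> x = y.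
Proof. by rewrite add2 addr0. Qed.

Lemma qf_expand (l a c : F) : chi (qf l a + qf l (a + c)) = chi (qf l c) * chi (a * Lk l c).
Proof.
have n3 : (3 <= n)%N by case: hn => ->; lia.
rewrite -chiD; apply: chi_Tr.
have -> : qf l a + qf l (a + c) = qf l c + a * (l * sg 1 c) + sg 1 a * (l * c)
    + a * sg 3 c + sg 3 a * c.
  apply: (@char2_eq _ _ (l * (a * sg 1 a) + a * sg 3 a)).
  by rewrite /qf !expeE !expKE !sgD; ring.
rewrite /Lk !TrD.
have -> : Tr n (sg 1 a * (l * c)) = Tr n (a * sgm 1 (l * c)).
  by rewrite -(Tr_sgm 1) sgmM sgKm //; lia.
have -> : Tr n (sg 3 a * c) = Tr n (a * sgm 3 c).
  by rewrite -(Tr_sgm 3) sgmM sgKm.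
rewrite !mulrDr !TrD.
by rewrite !addrA.
Qed.
Definition U (l : F) : int := \sum_(a : F) chi (qf l a).

Lemma U2 (l : F) : U l * U l =
  #|F|%:R * \sum_(c : F) (if Lk l c == 0 then chi (qf l c) else 0).
Proof.
rewrite /U mulr_suml.
transitivity (\sum_(a : F) \sum_(c : F) chi (qf l c) * chi (a * Lk l c)).
  apply: eq_bigr => a _; rewrite mulr_sumr (reindex_inj (addrI a)) /=.
  by apply: eq_bigr => c _; rewrite -chiD qf_expand.
rewrite exchange_big /= mulr_sumr; apply: eq_bigr => c _.
rewrite -mulr_sumr.
have -> : \sum_(a : F) chi (a * Lk l c) = if Lk l c == 0 then #|F|%:R else 0 by rewrite sum_chi_eq.
by case: (Lk l c == 0); rewrite ?mulr0 // mulrC.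
Qed.

Definition Vk (l c : F) := l * (c * sg 1 c) + Xc c + sgm 1 (Xc c) + sgm 2 (Xc c).

Lemma kernel_val (l c : F) : c != 0 -> Lk l c = 0 ->
  (Vk l c = 0 \/ Vk l c = 1) /\ chi (qf l c) = sgnF (Vk l c).
Proof.
move=> c0 hL.
have n3 : (3 < n)%N by case: hn => ->; lia.
have hV : sgm 1 (Vk l c) = Vk l c.
  have h : Vk l c + c * Lk l c = sgm 1 (Vk l c) +
      ((l * (c * sg 1 c) + Xc c) + (l * (c * sg 1 c) + Xc c)).
    rewrite /Vk /Lk !sgmD /Xc !sgmM !sgmsgm ?sgKm ?sgm_sg; try lia.
    ring.
  by move/char2_eq: h; rewrite hL mulr0 addr0.
have hV1 : sg 1 (Vk l c) = Vk l c by rewrite -{1}hV sgmK //; lia.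
have V01 := sq01 (sg_fix hV1).
split => //.
have hT : Tr n (qf l c) = Tr n (Vk l c).
  rewrite /qf /Vk !TrD Tr_sgm Tr_sgm expeE expKE -/(Xc c).
  by rewrite -addrA add2 addr0 mulrA.
rewrite /chi hT.
by case: V01 => ->; rewrite ?Tr0 ?Tr1.
Qed.

Lemma sq_pow2 (u : int) : u * u = (2 ^ n)%N%:R -> False.
Proof.
move=> h.
have h' : (`|u| * `|u| = 2 ^ n)%N.
  by have := congr1 absz h; rewrite abszM natz.
have : logn 2 (`|u| ^ 2) = n by rewrite expnS expn1 h' pfactorK.
rewrite lognX => hn2.
by move: hnodd; rewrite -hn2 oddM.
Qed.
Local Notation q := (#|F|%:R : int).

Lemma q_pos : 0 < q.
Proof. by rewrite ltr0n; apply/card_gt0P; exists 0. Qed.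

Lemma q_neq0 : q != 0.
Proof. by rewrite gt_eqF // q_pos. Qed.

Lemma qf0 (l : F) : qf l 0 = 0.
Proof. by rewrite /qf expeE expKE !mul0r mulr0 addr0. Qed.

Lemma Lk0 (l : F) : Lk l 0 = 0.
Proof. by rewrite /Lk !sg0 mulr0 /sgm !fr0 !addr0. Qed.

Lemma U2_ge (l : F) : Tr n (l ^+ e) = 1 -> 2 * q <= U l * U l.
Proof.
move=> hT.
have hk : forall c, Lk l c = 0 -> chi (qf l c) = 1.
  move=> c hc; have [-> | c0] := eqVneq c 0; first by rewrite qf0 chi0.
  have [[V0 | V1] ->] := kernel_val c0 hc; first by rewrite V0 /sgnF eqxx.
  have : Tr n (l ^+ e) = 0.
    apply: (factB c0); move: V1; rewrite /Vk => h.
    apply: (@char2_eq _ _ (- (Xc c + sgm 1 (Xc c) + sgm 2 (Xc c)))).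
    by rewrite -h; ring.
  by rewrite hT => /eqP; rewrite oner_eq0.
rewrite U2.
rewrite (bigD1 0) //= Lk0 eqxx qf0 chi0.
set k := \sum_(c | c != 0) _.
have k0 : 0 <= k.
  by apply: sumr_ge0 => c _; case: eqP => // /hk ->.
have [kz | kpos] := eqVneq k 0.
  exfalso; apply: sq_pow2 (U l) _.
  by rewrite U2 (bigD1 0) //= Lk0 eqxx qf0 chi0 -/k kz addr0 mulr1 hq.
have k1 : 1 <= k by rewrite -gtz0_ge1 lt_def kpos k0.
have := q_pos; move: (#|F|%:R : int) => Q hQ; nia.
Qed.

Lemma sum_chi_e : \sum_(l : F) chi (l ^+ e) = 0.
Proof.
transitivity (\sum_(y : F) chi y); first by symmetry; apply: (reindex_inj expe_inj).
have h1 := sum_chi 1; rewrite oner_eq0 in h1; rewrite -[RHS]h1.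
by apply: eq_bigr => x _; rewrite mul1r.
Qed.

Lemma sum_chi_e' : \sum_(l : F) chi (l ^+ e) = 0.
Proof. exact: sum_chi_e. Qed.

Lemma addeq0 (x y : F) : (x + y == 0) = (x == y).
Proof. by rewrite addr_eq0 oppF. Qed.

Lemma sumU2 : \sum_(l : F) U l * U l = q * q.
Proof.
transitivity (\sum_(a : F) \sum_(b : F) \sum_(l : F)
    chi (l * (a ^+ e + b ^+ e)) * chi (a ^+ K + b ^+ K)).
  rewrite /U; under eq_bigr do rewrite mulr_suml; rewrite exchange_big /=.
  apply: eq_bigr => a _; under eq_bigr do rewrite mulr_sumr; rewrite exchange_big /=.
  apply: eq_bigr => b _; apply: eq_bigr => l _.
  rewrite -!chiD; congr chi; rewrite /qf; ring.
transitivity (\sum_(a : F) q * chi (a ^+ K + a ^+ K)).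
  apply: eq_bigr => a _; under eq_bigr do rewrite -mulr_suml sum_chi_eq.
  rewrite (bigD1 a) //= addeq0 eqxx big1 ?addr0 // => b hb.
  by rewrite addeq0 (inj_eq expe_inj) eq_sym (negbTE hb) mul0r.
by rewrite (eq_bigr (fun _ => q)) ?sumr_const ?mulr_natr // => a _; rewrite add2 chi0 mulr1.
Qed.

Lemma U2_val (l : F) : U l * U l = q * (1 - chi (l ^+ e)).
Proof.
pose g l := U l * U l - q * (1 - chi (l ^+ e)).
have g0 : forall l, 0 <= g l.
  move=> m; rewrite /g subr_ge0 /chi /sgnF.
  case: (Tr01 (m ^+ e)) => h; rewrite h; first by rewrite eqxx subrr mulr0 -expr2 sqr_ge0.
  by rewrite oner_eq0 opprK mulrC; apply: U2_ge.
have gs : \sum_(m : F) g m = 0.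
  rewrite /g sumrB sumU2 -mulr_sumr sumrB sum_chi_e subr0 sumr_const.
  by rewrite -[#|F|%:R]/q mulr_natr subrr.
have := @psumr_eq0P _ F xpredT g (fun m _ => g0 m) gs l isT.
by rewrite /g => /eqP; rewrite subr_eq0 => /eqP.
Qed.
Definition W (v : F) : int := \sum_(x : F) chi (x ^+ e + v * x).
Definition Tt (v : F) : int :=
  \sum_(a : F) \sum_(b : F) (if b ^+ e == a ^+ e + v then chi (a ^+ K + b ^+ K) else 0).

Lemma W0 : W 0 = 0.
Proof. by rewrite /W -[RHS]sum_chi_e; apply: eq_bigr => x _; rewrite mul0r addr0. Qed.

Lemma T_val (v : F) : Tt v = (if v == 0 then q else 0) - W v.
Proof.
apply: (mulfI q_neq0).
transitivity (\sum_(l : F) chi (l * v) * (U l * U l)).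
  rewrite /Tt /U mulr_sumr.
  transitivity (\sum_(a : F) \sum_(b : F) \sum_(l : F) chi (l * v) * (chi (qf l a) * chi (qf l b))).
    apply: eq_bigr => a _; rewrite mulr_sumr; apply: eq_bigr => b _.
    have -> : (b ^+ e == a ^+ e + v) = (b ^+ e + (a ^+ e + v) == 0) by rewrite addeq0.
    have -> : forall (P : bool) (X : int), q * (if P then X else 0) = (if P then q else 0) * X.
      by move=> P X; case: P; rewrite ?mulr0 ?mul0r // mulrC.
    rewrite -sum_chi_eq mulr_suml; apply: eq_bigr => l _.
    by rewrite -!chiD; congr chi; rewrite /qf; ring.
  transitivity (\sum_(l : F) \sum_(a : F) \sum_(b : F)
      chi (l * v) * (chi (qf l a) * chi (qf l b))).
    under eq_bigr do rewrite exchange_big /=.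
    by rewrite exchange_big.
  apply: eq_bigr => l _.
  rewrite mulr_suml mulr_sumr; apply: eq_bigr => a _.
  by rewrite mulr_sumr mulr_sumr.
rewrite (eq_bigr (fun l => q * (chi (l * v) - chi (l ^+ e + v * l)))); last first.
  by move=> l _; rewrite U2_val mulrCA mulrBr mulr1 chiD (mulrC v l) (mulrC (chi (l ^+ e))).
rewrite -mulr_sumr sumrB sum_chi_eq.
by [].
Qed.

Lemma Dl_def (x : F) : (x + 1) ^+ sK + x ^+ sK = (x + 1) ^+ sK + x ^+ sK. Proof. by []. Qed.
Definition Dl (x : F) := (x + 1) ^+ sK + x ^+ sK.

Lemma S_T (v : F) : v != 0 -> \sum_(x : F) chi (v ^+ sK * Dl x) = Tt v.
Proof.
move=> v0.
set er := invF expe_inj.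
have erK y : er y ^+ e = y := f_invF expe_inj y.
have erE a : er (a ^+ e) = a := invF_f expe_inj a.
have erKs y : er y ^+ K = y ^+ sK by rewrite -eK exprM erK.
transitivity (\sum_(a : F) chi (a ^+ K + er (a ^+ e + v) ^+ K)); last first.
  apply: eq_bigr => a _; rewrite (bigD1 (er (a ^+ e + v))) //= erK eqxx big1 ?addr0 //.
  move=> b hb; case: eqP => // hbe; exfalso; move/eqP: hb; apply.
  by rewrite -hbe erE.
transitivity (\sum_(y : F) chi (er y ^+ K + er (y + v) ^+ K)); last first.
  rewrite [LHS](reindex_inj expe_inj) /=; apply: eq_bigr => a _; by rewrite erE.
rewrite [RHS](reindex_inj (mulfI v0)) /=; apply: eq_bigr => x _.
rewrite !erKs; congr chi.
have -> : v * x + v = v * (x + 1) by rewrite mulrDr mulr1.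
by rewrite !exprMn /Dl mulrDr addrC.
Qed.
Variable d : nat.
Hypothesis hsd : (sK * d %% (2 ^ n - 1) = 1)%N.

Lemma sd_pos : (0 < sK * d)%N.
Proof. by move: hsd; case: (sK * d)%N => //; rewrite mod0n. Qed.

Lemma d_pos : (0 < d)%N.
Proof. by have := sd_pos; case: d => //; rewrite muln0. Qed.

Lemma expsd (x : F) : x ^+ (sK * d) = x.
Proof.
have [-> | x0] := eqVneq x 0; first by rewrite expr0n gtn_eqF // sd_pos.
have hM : x ^+ (2 ^ n - 1) = 1.
  have h : x ^+ (2 ^ n - 1) * x = 1 * x.
    by rewrite -exprSr subn1 prednK ?expn_gt0 // -hq expf_card mul1r.
  exact: (mulIf x0 h).
by rewrite (divn_eq (sK * d) (2 ^ n - 1)) hsd (mulnC _ (2 ^ n - 1)%N) exprD exprM hM expr1n mul1r expr1.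
Qed.

Lemma powd_inj : injective (fun x : F => x ^+ d).
Proof.
move=> x y /= h.
by rewrite -(expsd x) -(expsd y) mulnC !exprM h.
Qed.

Lemma powds (x : F) : (x ^+ d) ^+ sK = x.
Proof. by rewrite -exprM mulnC expsd. Qed.

Lemma S_all (mu : F) :
  \sum_(x : F) chi (mu * Dl x) = (if mu == 0 then q else 0) - W (mu ^+ d).
Proof.
have [-> | m0] := eqVneq mu 0.
  rewrite expr0n gtn_eqF ?d_pos // W0 subr0.
  by rewrite (eq_bigr (fun _ => 1)) ?sumr_const // => x _; rewrite mul0r chi0.
have v0 : mu ^+ d != 0 by rewrite expf_neq0.
by rewrite -{1}(powds mu) S_T // T_val (negbTE v0) sub0r.
Qed.

Lemma parseval : \sum_(v : F) W v * W v = q * q.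
Proof.
transitivity (\sum_(x : F) \sum_(y : F) \sum_(v : F) chi (x ^+ e + y ^+ e) * chi (v * (x + y))).
  rewrite /W; under eq_bigr do rewrite mulr_suml; rewrite exchange_big /=.
  apply: eq_bigr => x _; under eq_bigr do rewrite mulr_sumr; rewrite exchange_big /=.
  apply: eq_bigr => y _; apply: eq_bigr => v _.
  by rewrite -!chiD; congr chi; ring.
transitivity (\sum_(x : F) q * chi (x ^+ e + x ^+ e)).
  apply: eq_bigr => x _; under eq_bigr do rewrite -mulr_sumr sum_chi_eq.
  rewrite (bigD1 x) //= add2 eqxx big1 ?addr0; first by rewrite mulrC.
  by move=> y hy; rewrite addeq0 eq_sym (negbTE hy) mulr0.
by rewrite (eq_bigr (fun _ => q)) ?sumr_const ?mulr_natr // => a _; rewrite add2 chi0 mulr1.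
Qed.

Definition cnt (x : F) : int := \sum_(y : F) (if Dl y == Dl x then 1 else 0).

Lemma Dl1 (x : F) : Dl (x + 1) = Dl x.
Proof. by rewrite /Dl -addrA add2 addr0 addrC. Qed.

Lemma sum_cnt : \sum_(x : F) cnt x = 2 * q.
Proof.
apply: (mulfI q_neq0).
transitivity (\sum_(mu : F) (\sum_(x : F) chi (mu * Dl x)) * (\sum_(x : F) chi (mu * Dl x))).
  rewrite /cnt mulr_sumr.
  transitivity (\sum_(x : F) \sum_(y : F) \sum_(mu : F) chi (mu * Dl x) * chi (mu * Dl y)).
    apply: eq_bigr => x _; rewrite mulr_sumr; apply: eq_bigr => y _.
    have -> : (Dl y == Dl x) = (Dl y + Dl x == 0) by rewrite addeq0.
    have -> : q * (if Dl y + Dl x == 0 then 1 else 0) = (if Dl y + Dl x == 0 then q else 0).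
      by case: ifP; rewrite ?mulr0 ?mulr1.
    rewrite -sum_chi_eq; apply: eq_bigr => mu _.
    by rewrite -chiD; congr chi; ring.
  transitivity (\sum_(mu : F) \sum_(x : F) \sum_(y : F) chi (mu * Dl x) * chi (mu * Dl y)).
    under eq_bigr do rewrite exchange_big /=.
    by rewrite exchange_big.
  by apply: eq_bigr => mu _; rewrite mulr_suml; apply: eq_bigr => x _; rewrite mulr_sumr.
under eq_bigr do rewrite S_all.
pose A (v : F) : int := if v == 0 then q else 0.
transitivity (\sum_(v : F) (A v - W v) * (A v - W v)).
  rewrite [RHS](reindex_inj powd_inj) /=; apply: eq_bigr => mu _.
  by rewrite /A expf_eq0 d_pos.
rewrite (eq_bigr (fun v => A v * A v - (A v * W v + A v * W v) + W v * W v)); last first.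
  by move=> v _; ring.
rewrite big_split /= sumrB parseval big_split /=.
have hA : \sum_(v : F) A v * W v = 0.
  rewrite (bigD1 0) //= W0 mulr0 big1 ?addr0 // => v hv.
  by rewrite /A (negbTE hv) mul0r.
have hAA : \sum_(v : F) A v * A v = q * q.
  rewrite (bigD1 0) //= big1 ?addr0; first by rewrite /A eqxx.
  by move=> v hv; rewrite /A (negbTE hv) mul0r.
rewrite hA hAA.
ring.
Qed.

Lemma cnt2 (x : F) : cnt x = 2.
Proof.
have ge2 : forall x, 2 <= cnt x.
  move=> z; rewrite /cnt (bigD1 z) //= eqxx (bigD1 (z + 1)) /=; last first.
    by rewrite -subr_eq0 addrC addKr oner_eq0.
  rewrite Dl1 eqxx addrA -[2]/(1 + 1) lerDl.
  by apply: sumr_ge0 => y _; case: ifP.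
have hs : \sum_(z : F) (cnt z - 2) = 0.
  have hs2 : \sum_(z : F) (2 : int) = 2 * q.
    have -> : (2 : int) * q = 2 *+ #|F| by rewrite mulr_natr.
    by rewrite sumr_const.
  by rewrite sumrB sum_cnt hs2 subrr.
have g0 : forall z, 0 <= cnt z - 2 by move=> z; rewrite subr_ge0.
have := @psumr_eq0P _ F xpredT (fun z => cnt z - 2) (fun z _ => g0 z) hs x isT.
by move/eqP; rewrite subr_eq0 => /eqP.
Qed.

Lemma x1_neq (x : F) : x + 1 != x.
Proof. by rewrite -subr_eq0 addrC addKr oner_eq0. Qed.

Lemma Dl_2to1 (x y : F) : Dl y = Dl x -> y = x \/ y = x + 1.
Proof.
move=> h; have [-> | yx] := eqVneq y x; first by left.
have [-> | yx1] := eqVneq y (x + 1); first by right.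
exfalso; have := cnt2 x.
rewrite /cnt (bigD1 x) //= eqxx (bigD1 (x + 1)) /=; last by rewrite x1_neq.
rewrite Dl1 eqxx (bigD1 y) /=; last by rewrite yx yx1.
rewrite h eqxx.
set r := \sum_(i0 | _) _.
have : 0 <= r by apply: sumr_ge0 => z _; case: ifP.
lia.
Qed.
Lemma Dl_in (x : F) : Dl x \in Bset F sK.
Proof. by apply/imsetP; exists x. Qed.

Lemma sum_Dl_B (f : F -> int) :
  \sum_(x : F) f (Dl x) = 2 * \sum_(y : F) (if y \in Bset F sK then f y else 0).
Proof.
transitivity (\sum_(y : F) \sum_(x : F) (if Dl x == y then f y else 0)).
  rewrite exchange_big /=; apply: eq_bigr => x _.
  rewrite (bigD1 (Dl x)) //= eqxx big1 ?addr0 // => y hy.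
  by rewrite eq_sym (negbTE hy).
rewrite mulr_sumr; apply: eq_bigr => y _.
case: ifP => hy.
  case/imsetP: hy => x0 _ ->.
  have := cnt2 x0; rewrite /cnt => h.
  rewrite -/(Dl x0) -h mulr_suml.
  by apply: eq_bigr => x _; case: ifP; rewrite ?mul1r ?mul0r.
rewrite mulr0 big1 // => x _; case: eqP => // hx.
by move: hy; rewrite -hx Dl_in.
Qed.

Lemma walshB (mu : F) : walsh n (charf (Bset F sK)) mu = W (mu ^+ d).
Proof.
rewrite /walsh.
transitivity (\sum_(y : F) (chi (mu * y) - 2 * (if y \in Bset F sK then chi (mu * y) else 0))).
  apply: eq_bigr => y _; rewrite /charf /chi.
  case: (y \in Bset F sK); last by rewrite add0r mulr0 subr0.
  rewrite /sgnF; case: (Tr01 (mu * y)) => ->.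
    by rewrite addr0 oner_eq0 eqxx mulr1.
  by rewrite add2 eqxx oner_eq0 mulrN1 opprK.
rewrite sumrB -mulr_sumr -sum_Dl_B sum_chi S_all.
set a := (if _ then _ else _); ring.
Qed.

Lemma walshE (v : F) : walsh n (charf (Eset F n i)) v = W v.
Proof.
rewrite /walsh /W; apply: eq_bigr => x _.
rewrite /charf /Eset inE /chi TrD /e.
case: (Tr01 (x ^+ (2 ^ i + 1))) => ->; last by rewrite eqxx.
by rewrite eq_sym oner_eq0.
Qed.

Lemma main_sec (mu : F) :
    walsh n (charf (Bset F sK)) mu = walsh n (charf (Eset F n i)) (mu ^+ d) /\
    walsh n (charf (Eset F n i)) (mu ^+ d) =
      \sum_(x : F) sgnF (Tr n (x ^+ (2 ^ i + 1) + mu ^+ d * x)).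
Proof. by rewrite walshB walshE. Qed.

End Basic.



Theorem proposition17 (F : finFieldType) (n i s d : nat) :
  (0 < i)%N -> ~~ odd i ->
  (n = 3 * i + 1 \/ n = 3 * i - 1)%N ->
  #|F| = (2 ^ n)%N ->
  s = (2 ^ (2 * i) - 2 ^ i + 1)%N ->
  (s * d %% (2 ^ n - 1) = 1)%N ->
  forall mu : F,
    walsh n (charf (Bset F s)) mu = walsh n (charf (Eset F n i)) (mu ^+ d) /\
    walsh n (charf (Eset F n i)) (mu ^+ d) =
      \sum_(x : F) sgnF (Tr n (x ^+ (2 ^ i + 1) + mu ^+ d * x)).
Proof.
move=> hi hodd hn hq hs hsd mu.
have hnodd : odd n.
  have [m hm] : exists m, i = m.*2 by exists i./2; rewrite -[LHS]odd_double_half (negbTE hodd).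
  case: hn => ->; rewrite hm; first by rewrite oddD oddM odd_double.
  rewrite oddB ?oddM ?odd_double //.
  by move: hi; rewrite hm -!mul2n => hi'; lia.
subst s.
exact: (main_sec hq hnodd hi hodd hn hsd mu).
Qed.
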